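(* Let $\mathcal{Y}$, $\mathcal{O}$ be finite sets, $\varphi\colon\mathcal{Y}\to\mathbb{R}^p$, $\psi\colon\mathcal{O}\to\mathbb{R}^p$, and $L(\hat y,y)=\langle\psi(\hat y),V\varphi(y)+b\rangle+c(y)$ with $V\in\mathbb{R}^{p\times p}$, $b\in\mathbb{R}^p$, $c\colon\mathcal{Y}\to\mathbb{R}$. Let $\Psi\colon\mathbb{R}^p\to\mathbb{R}\cup\{\infty\}$ be of Legendre type and $\frac1\beta$-strongly convex over $\mathcal{C}$ w.r.t. a norm $\|\cdot\|$ ($\beta>0$), where $\mathcal{C}$ is a closed convex set with $\varphi(\mathcal{Y})\subseteq\mathcal{C}\subseteq\operatorname{dom}(\Psi)$. Let $\sigma:=\max_{\hat y\in\mathcal{O}}\|V^\top\psi(\hat y)\|_*>0$. Take the surrogate $S(\theta,y)=S^\Psi_{\mathcal{C}}(\theta,y)$ and the decoder $d=\hat y_L\circ P^\Psi_{\mathcal{C}}$. Then the calibration function satisfies $$\zeta(\epsilon)\ge\frac{\epsilon^2}{8\beta\sigma^2}\qquad\text{for all }\epsilon\ge0.$$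
   Context: $\Omega=\Psi+I_{\mathcal{C}}$ with $I_{\mathcal{C}}$ the indicator of $\mathcal{C}$; $S^\Psi_{\mathcal{C}}(\theta,y)=\Omega^*(\theta)+\Omega(\varphi(y))-\langle\theta,\varphi(y)\rangle$ with $\Omega^*$ the Fenchel conjugate. $P^\Psi_{\mathcal{C}}(\theta)=\operatorname{argmin}_{u\in\mathcal{C}}D_\Psi(u,\nabla\Psi^*(\theta))$, $D_\Psi(u,v)=\Psi(u)-\Psi(v)-\langle\nabla\Psi(v),u-v\rangle$; under the hypotheses $P^\Psi_{\mathcal{C}}=\nabla\Omega^*$. Strong convexity over $\mathcal{C}$: $\Psi(tu+(1-t)v)\le t\Psi(u)+(1-t)\Psi(v)-\frac{t(1-t)}{2\beta}\|u-v\|^2$ for $u,v\in\mathcal{C}$, $t\in[0,1]$. $\|\cdot\|_*$ is the dual norm. $\hat y_L(u)\in\operatorname{argmin}_{y'\in\mathcal{O}}\langle\psi(y'),Vu+b\rangle$ (fixed tie-breaking). Pointwise risks for $q\in\triangle^{|\mathcal{Y}|}$: $\ell(\hat y,q)=\mathbb{E}_{Y\sim q}L(\hat y,Y)$, $s(\theta,q)=\mathbb{E}_{Y\sim q}S(\theta,Y)$, excesses $\delta\ell(\hat y,q)=\ell(\hat y,q)-\min_{y'\in\mathcal{O}}\ell(y',q)$, $\delta s(\theta,q)=s(\theta,q)-\inf_{\theta'}s(\theta',q)$. Calibration function: $\zeta(\epsilon)=\inf_{\theta\in\mathbb{R}^p,q\in\triangle^{|\mathcal{Y}|}}\delta s(\theta,q)$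 subject to $\delta\ell(d(\theta),q)\ge\epsilon$. *)

(* Defs.v *)
From mathcomp Require Import all_boot.
From Stdlib Require Import Reals ClassicalEpsilon.
Set Implicit Arguments. Unset Strict Implicit. Unset Printing Implicit Defensive.
Open Scope R_scope.

Definition vec (p : nat) := 'I_p -> R.
Definition vadd {p} (x y : vec p) : vec p := fun i => x i + y i.
Definition vsub {p} (x y : vec p) : vec p := fun i => x i - y i.
Definition vscale {p} (a : R) (x : vec p) : vec p := fun i => a * x i.
Definition dot {p} (x y : vec p) : R := \big[Rplus/R0]_(i < p) (x i * y i).
Definition enorm {p} (x : vec p) : R := sqrt (dot x x).
Definition mat (p : nat) := 'I_p -> 'I_p -> R.
Definition mulmv {p} (V : mat p) (x : vec p) : vec p :=
  fun i => \big[Rplus/R0]_(j < p) (V i j * x j).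
Definition mulmtv {p} (V : mat p) (x : vec p) : vec p :=
  fun j => \big[Rplus/R0]_(i < p) (V i j * x i).
Definition cvx {p} (t : R) (u v : vec p) : vec p :=
  vadd (vscale t u) (vscale (1 - t) v).

(* ---------- total sup / inf (junk value 0 when no real sup/inf exists) ---------- *)
Definition Rsup (E : R -> Prop) : R :=
  match excluded_middle_informative (exists l, is_lub E l) with
  | left H => proj1_sig (constructive_indefinite_description _ H)
  | right _ => 0
  end.
Definition Rinf (E : R -> Prop) : R := - Rsup (fun x => E (- x)).

Definition is_norm {p} (N : vec p -> R) : Prop :=
  (forall x, 0 <= N x) /\
  (forall x, N x = 0 -> x = (fun _ => 0)) /\
  (forall a x, N (vscale a x) = Rabs a * N x) /\
  (forall x y, N (vadd x y) <= N x + N y).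
Definition dual_norm {p} (N : vec p -> R) (z : vec p) : R :=
  Rsup (fun w => exists x, N x <= 1 /\ w = dot z x).

(* ---------- topology of R^p (Euclidean; all norms equivalent) ---------- *)
Definition vinterior {p} (D : vec p -> Prop) (x : vec p) : Prop :=
  exists d, 0 < d /\ forall y, enorm (vsub y x) < d -> D y.
Definition vclosed {p} (C : vec p -> Prop) : Prop :=
  forall x, (forall d, 0 < d -> exists y, C y /\ enorm (vsub y x) < d) -> C x.
Definition vconvex {p} (C : vec p -> Prop) : Prop :=
  forall u v t, C u -> C v -> 0 <= t <= 1 -> C (cvx t u v).
Definition seq_conv {p} (xs : nat -> vec p) (x : vec p) : Prop :=
  forall e, 0 < e -> exists N, forall k, (N <= k)%nat -> enorm (vsub (xs k) x) < e.

Definition has_grad {p} (D : vec p -> Prop) (f : vec p -> R) (x g : vec p) : Prop :=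
  vinterior D x /\
  forall e, 0 < e -> exists d, 0 < d /\ forall h, enorm h < d ->
    Rabs (f (vadd x h) - f x - dot g h) <= e * enorm h.

(* ---------- extended-valued functions R^p -> R U {+oo} ----------
   An extended-valued function is represented by a pair (dom, f):
   its value is f x on dom and +oo outside dom. *)
Definition ext_convex {p} (dom : vec p -> Prop) (f : vec p -> R) : Prop :=
  vconvex dom /\
  forall u v t, dom u -> dom v -> 0 <= t <= 1 ->
    f (cvx t u v) <= t * f u + (1 - t) * f v.
Definition ext_proper {p} (dom : vec p -> Prop) : Prop := exists x, dom x.
(* closed = lower semicontinuous (for extended values) *)
Definition ext_lsc {p} (dom : vec p -> Prop) (f : vec p -> R) : Prop :=
  forall x a, (~ dom x \/ a < f x) ->
    exists d, 0 < d /\ forall y, enorm (vsub y x) < d -> dom y -> a < f y.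
Definition subgrad {p} (dom : vec p -> Prop) (f : vec p -> R) (x g : vec p) : Prop :=
  dom x /\ forall y, dom y -> f x + dot g (vsub y x) <= f y.
Definition dom_subdiff {p} (dom : vec p -> Prop) (f : vec p -> R) (x : vec p) : Prop :=
  exists g, subgrad dom f x g.
Definition strictly_convex_on {p} (D : vec p -> Prop) (f : vec p -> R) : Prop :=
  forall u v t, D u -> D v -> u <> v -> 0 < t < 1 ->
    f (cvx t u v) < t * f u + (1 - t) * f v.
(* Rockafellar, Convex Analysis, Sec. 26 *)
Definition essentially_smooth {p} (dom : vec p -> Prop) (f : vec p -> R) : Prop :=
  (exists x, vinterior dom x) /\
  (forall x, vinterior dom x -> exists g, has_grad dom f x g) /\
  (forall (xs gs : nat -> vec p) x,
      (forall k, has_grad dom f (xs k) (gs k)) -> seq_conv xs x -> ~ vinterior dom x ->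
      forall M, exists N, forall k, (N <= k)%nat -> M <= enorm (gs k)).
Definition essentially_strictly_convex {p} (dom : vec p -> Prop) (f : vec p -> R) : Prop :=
  forall D : vec p -> Prop, vconvex D -> (forall x, D x -> dom_subdiff dom f x) ->
    strictly_convex_on D f.
Definition legendre_type {p} (dom : vec p -> Prop) (f : vec p -> R) : Prop :=
  ext_proper dom /\ ext_convex dom f /\ ext_lsc dom f /\
  essentially_smooth dom f /\ essentially_strictly_convex dom f.

Definition strongly_convex_over {p} (f : vec p -> R) (C : vec p -> Prop)
    (N : vec p -> R) (beta : R) : Prop :=
  forall u v t, C u -> C v -> 0 <= t <= 1 ->
    f (cvx t u v) <= t * f u + (1 - t) * f v - t * (1 - t) / (2 * beta) * (N (vsub u v))^2.

Definition conj_set {p} (dom : vec p -> Prop) (f : vec p -> R) (th : vec p) : R -> Prop :=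
  fun w => exists u, dom u /\ w = dot th u - f u.
(* the conjugate is finite (< +oo) at th *)
Definition conj_fin {p} (dom : vec p -> Prop) (f : vec p -> R) (th : vec p) : Prop :=
  exists l, is_lub (conj_set dom f th) l.
Definition fconj {p} (dom : vec p -> Prop) (f : vec p -> R) (th : vec p) : R :=
  Rsup (conj_set dom f th).

(* Omega = Psi + I_C, as the extended function (dom Psi /\ C, Psi) *)
Definition Omega_dom {p} (dom C : vec p -> Prop) : vec p -> Prop := fun u => dom u /\ C u.
Definition Omega_star {p} (dom C : vec p -> Prop) (Psi : vec p -> R) (th : vec p) : R :=
  fconj (Omega_dom dom C) Psi th.

(* Bregman divergence D_Psi(u, v) = Psi u - Psi v - <grad Psi v, u - v>, given g = grad Psi v *)
Definition bregman {p} (Psi : vec p -> R) (u v g : vec p) : R :=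
  Psi u - Psi v - dot g (vsub u v).

(* u = P^Psi_C(th) = argmin_{u in C} D_Psi(u, grad Psi^*(th)) *)
Definition bregman_proj {p} (dom C : vec p -> Prop) (Psi : vec p -> R) (th u : vec p) : Prop :=
  exists v g, has_grad (conj_fin dom Psi) (fconj dom Psi) th v /\
    has_grad dom Psi v g /\
    C u /\ forall u', C u' -> bregman Psi u v g <= bregman Psi u' v g.
(* P^Psi_C(th): the Bregman projection where grad Psi^*(th) exists; at the
   remaining th it is taken to be grad Omega^*(th) (the paper's identity
   P^Psi_C = grad Omega^* ). *)
Definition proj_rel {p} (dom C : vec p -> Prop) (Psi : vec p -> R) (th u : vec p) : Prop :=
  bregman_proj dom C Psi th u \/
  ((~ exists v, has_grad (conj_fin dom Psi) (fconj dom Psi) th v) /\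
   has_grad (conj_fin (Omega_dom dom C) Psi) (Omega_star dom C Psi) th u).

Section Task.
Variables (p : nat) (Y O : finType).

Definition lossL (psi : O -> vec p) (phi : Y -> vec p) (V : mat p) (b : vec p)
    (c : Y -> R) (o : O) (y : Y) : R :=
  dot (psi o) (vadd (mulmv V (phi y)) b) + c y.

(* o = yhat_L(u), for any (hence every fixed) tie-breaking rule *)
Definition yhat_rel (psi : O -> vec p) (V : mat p) (b u : vec p) (o : O) : Prop :=
  forall o', dot (psi o) (vadd (mulmv V u) b) <= dot (psi o') (vadd (mulmv V u) b).

Definition decoder_rel (psi : O -> vec p) (V : mat p) (b : vec p)
    (dom C : vec p -> Prop) (Psi : vec p -> R) (th : vec p) (o : O) : Prop :=
  exists u, proj_rel dom C Psi th u /\ yhat_rel psi V b u o.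

Definition in_simplex (q : Y -> R) : Prop :=
  (forall y, 0 <= q y) /\ \big[Rplus/R0]_(y : Y) q y = 1.

Definition ell psi phi V b c (o : O) (q : Y -> R) : R :=
  \big[Rplus/R0]_(y : Y) (q y * lossL psi phi V b c o y).
Definition delta_ell psi phi V b c (o : O) (q : Y -> R) : R :=
  ell psi phi V b c o q - Rinf (fun w => exists o', w = ell psi phi V b c o' q).

(* S^Psi_C(th, y) = Omega^*(th) + Omega(phi y) - <th, phi y>; Omega(phi y) = Psi(phi y)
   since phi y lies in C, a subset of dom Psi *)
Definition surr (phi : Y -> vec p) (dom C : vec p -> Prop) (Psi : vec p -> R)
    (th : vec p) (y : Y) : R :=
  Omega_star dom C Psi th + Psi (phi y) - dot th (phi y).
Definition srisk phi dom C Psi (th : vec p) (q : Y -> R) : R :=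
  \big[Rplus/R0]_(y : Y) (q y * surr phi dom C Psi th y).
Definition delta_s phi dom C Psi (th : vec p) (q : Y -> R) : R :=
  srisk phi dom C Psi th q - Rinf (fun w => exists th', w = srisk phi dom C Psi th' q).

(* zeta(eps) >= bnd, where zeta(eps) = inf { delta_s(th,q) : delta_ell(d th, q) >= eps }
   (inf of the empty set = +oo) *)
Definition zeta_ge psi phi V b c dom C Psi (eps bnd : R) : Prop :=
  forall (th : vec p) (q : Y -> R) (o : O),
    in_simplex q -> decoder_rel psi V b dom C Psi th o ->
    eps <= delta_ell psi phi V b c o q ->
    bnd <= delta_s phi dom C Psi th q.
End Task.

(* Main.v *)
From HB Require Import structures.
Require Import Defs.
From mathcomp Require Import all_boot.
From Stdlib Require Import Reals.
From Stdlib Require Import Lra Lia FunctionalExtensionality Classical ClassicalEpsilon.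
Open Scope R_scope.


HB.instance Definition _ := Monoid.isComLaw.Build R R0 Rplus
  (fun a b c => esym (Rplus_assoc a b c)) Rplus_comm Rplus_0_l.
HB.instance Definition _ := Monoid.isMulLaw.Build R R0 Rmult Rmult_0_l Rmult_0_r.
HB.instance Definition _ := Monoid.isAddLaw.Build R Rmult Rplus
  Rmult_plus_distr_r Rmult_plus_distr_l.

Section Vec.
Context {p : nat}.
Implicit Types x y z u v w : vec p.

Definition zv : vec p := fun _ => 0.

Ltac vext := apply functional_extensionality => i;
  rewrite /vadd /vsub /vscale /cvx /zv /=; ring.

Lemma dot_vadd_l x y z : dot (vadd x y) z = dot x z + dot y z.
Proof. rewrite /dot -big_split /=; apply: eq_bigr => i _; rewrite /vadd; ring. Qed.
Lemma dot_vscale_l a x y : dot (vscale a x) y = a * dot x y.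
Proof. rewrite /dot big_distrr /=; apply: eq_bigr => i _; rewrite /vscale; ring. Qed.
Lemma dot_comm x y : dot x y = dot y x.
Proof. rewrite /dot; apply: eq_bigr => i _; ring. Qed.
Lemma dot_vadd_r x y z : dot z (vadd x y) = dot z x + dot z y.
Proof. by rewrite dot_comm dot_vadd_l !(dot_comm z). Qed.
Lemma dot_vscale_r a x y : dot y (vscale a x) = a * dot y x.
Proof. by rewrite dot_comm dot_vscale_l (dot_comm x). Qed.
Lemma vsub_eq x y : vsub x y = vadd x (vscale (-1) y).
Proof. vext. Qed.
Lemma dot_vsub_l x y z : dot (vsub x y) z = dot x z - dot y z.
Proof. rewrite vsub_eq dot_vadd_l dot_vscale_l; ring. Qed.
Lemma dot_vsub_r x y z : dot z (vsub x y) = dot z x - dot z y.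
Proof. rewrite vsub_eq dot_vadd_r dot_vscale_r; ring. Qed.
Lemma dot_zv_l x : dot zv x = 0.
Proof. rewrite /dot big1 // => i _; rewrite /zv; ring. Qed.
Lemma dot_zv_r x : dot x zv = 0.
Proof. by rewrite dot_comm dot_zv_l. Qed.
Lemma dot_cvx_l t u v z : dot (cvx t u v) z = t * dot u z + (1 - t) * dot v z.
Proof. by rewrite /cvx dot_vadd_l !dot_vscale_l. Qed.
Lemma dot_cvx_r t u v z : dot z (cvx t u v) = t * dot z u + (1 - t) * dot z v.
Proof. by rewrite /cvx dot_vadd_r !dot_vscale_r. Qed.

Lemma sumR_le (I : finType) (F G : I -> R) :
  (forall i, F i <= G i) -> \big[Rplus/R0]_(i : I) F i <= \big[Rplus/R0]_(i : I) G i.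
Proof.
move=> H; apply: (big_ind2 (fun a b => a <= b)); [lra| |by move=> i _; apply: H].
by move=> a b c d; lra.
Qed.
Lemma sumR_ge0 (I : finType) (F : I -> R) :
  (forall i, 0 <= F i) -> 0 <= \big[Rplus/R0]_(i : I) F i.
Proof.
move=> H; apply: (big_ind (fun a => 0 <= a)); [lra| |by move=> i _; apply: H].
by move=> a b; lra.
Qed.
Lemma sumR_abs (I : finType) (F : I -> R) :
  Rabs (\big[Rplus/R0]_(i : I) F i) <= \big[Rplus/R0]_(i : I) Rabs (F i).
Proof.
apply: (big_ind2 (fun a b => Rabs a <= b)); [rewrite Rabs_R0; lra| |by move=> i _; lra].
move=> a b c d H1 H2; apply: Rle_trans (Rabs_triang _ _) _; lra.
Qed.
Lemma sumR_const n c : \big[Rplus/R0]_(i < n) c = INR n * c.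
Proof. elim: n => [|n IH]; first by rewrite big_ord0 /=; ring.
by rewrite big_ord_recl IH S_INR; ring. Qed.

Lemma dot_self_ge0 x : 0 <= dot x x.
Proof. apply: sumR_ge0 => i; nra. Qed.
Lemma coord_sq_le x i : x i * x i <= dot x x.
Proof.
rewrite /dot (bigD1 i) //=.
rewrite -{1}(Rplus_0_r (x i * x i)); apply: Rplus_le_compat_l.
by apply: (big_ind (fun a => 0 <= a)); [lra| move=> a b; lra| move=> j _; nra].
Qed.
Lemma enorm_ge0 x : 0 <= enorm x.
Proof. exact: sqrt_pos. Qed.
Lemma enorm_sq x : enorm x ^ 2 = dot x x.
Proof. by rewrite /enorm pow2_sqrt //; apply: dot_self_ge0. Qed.
Lemma coord_le_enorm x i : Rabs (x i) <= enorm x.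
Proof.
rewrite -sqrt_Rsqr_abs /enorm; apply: sqrt_le_1_alt.
rewrite /Rsqr; exact: coord_sq_le.
Qed.
Lemma enorm_scale a x : enorm (vscale a x) = Rabs a * enorm x.
Proof.
rewrite /enorm dot_vscale_l dot_vscale_r -Rmult_assoc sqrt_mult.
- by rewrite -/(Rsqr a) sqrt_Rsqr_abs.
- nra.
- exact: dot_self_ge0.
Qed.
Lemma enorm_eq0 x : enorm x = 0 -> x = zv.
Proof.
move=> H; have H2 : dot x x = 0 by rewrite -enorm_sq H; ring.
apply: functional_extensionality => i; rewrite /zv.
have := coord_sq_le x i; have := Rle_0_sqr (x i); rewrite /Rsqr; nra.
Qed.
Lemma enorm_zv : enorm zv = 0.
Proof. by rewrite /enorm dot_zv_l sqrt_0. Qed.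
Lemma vsub_sym x y : vsub y x = vscale (-1) (vsub x y).
Proof. vext. Qed.
Lemma enorm_vsub_sym x y : enorm (vsub y x) = enorm (vsub x y).
Proof. by rewrite vsub_sym enorm_scale Rabs_Ropp Rabs_R1; ring. Qed.

Definition sabs x := \big[Rplus/R0]_(i < p) Rabs (x i).
Lemma sabs_ge0 x : 0 <= sabs x.
Proof. apply: sumR_ge0 => i; exact: Rabs_pos. Qed.
Lemma dot_abs_le z x : Rabs (dot z x) <= sabs z * enorm x.
Proof.
rewrite /dot; apply: Rle_trans; first exact: sumR_abs.
rewrite /sabs big_distrl /=; apply: sumR_le => i.
rewrite Rabs_mult; apply: Rmult_le_compat_l; [exact: Rabs_pos| exact: coord_le_enorm].
Qed.
Lemma sabs_le_enorm x : sabs x <= INR p * enorm x.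
Proof. rewrite -sumR_const; apply: sumR_le => i; exact: coord_le_enorm. Qed.
Lemma dot_self_enorm x : dot x x = enorm x * enorm x.
Proof. by rewrite -enorm_sq; ring. Qed.
End Vec.


Lemma Rsup_lub E l : is_lub E l -> Rsup E = l.
Proof.
move=> H; rewrite /Rsup; case: excluded_middle_informative => [H1|H1].
- case: constructive_indefinite_description => m Hm /=; exact: is_lub_u Hm H.
- by exfalso; apply: H1; exists l.
Qed.
Lemma Rsup_nolub E : ~ (exists l, is_lub E l) -> Rsup E = 0.
Proof. by move=> H; rewrite /Rsup; case: excluded_middle_informative. Qed.

Set Implicit Arguments. Unset Strict Implicit.


Definition NL {n} (N : vec n -> R) : Prop :=
  (forall x, 0 <= N x) /\ (forall x, N x = 0 -> forall i, x i = 0) /\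
  (forall a x, N (vscale a x) = Rabs a * N x) /\
  (forall x y, N (vadd x y) <= N x + N y).

Lemma NL_zv n (N : vec n -> R) : NL N -> N zv = 0.
Proof.
move=> [_ [_ [Hs _]]].
have -> : (zv : vec n) = vscale 0 zv.
  by apply: functional_extensionality => i; rewrite /vscale /zv; ring.
by rewrite Hs Rabs_R0; ring.
Qed.
Arguments NL_zv {n N}.
Lemma NL_opp n (N : vec n -> R) x : NL N -> N (vscale (-1) x) = N x.
Proof. by move=> [_ [_ [Hs _]]]; rewrite Hs Rabs_Ropp Rabs_R1; ring. Qed.

Arguments NL_opp {n N}.
Definition ext0 {n} (w : vec n) : vec n.+1 :=
  fun j => if unlift ord0 j is Some k then w k else 0.
Definition e0 {n} : vec n.+1 := fun j => if j == ord0 then 1 else 0.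

Lemma ext0_lift n (w : vec n) k : ext0 w (lift ord0 k) = w k.
Proof. by rewrite /ext0 liftK. Qed.
Lemma ext0_0 n (w : vec n) : ext0 w ord0 = 0.
Proof. by rewrite /ext0 unlift_none. Qed.
Lemma e0_lift n k : (e0 : vec n.+1) (lift ord0 k) = 0.
Proof. by rewrite /e0 eq_sym (negbTE (neq_lift _ _)). Qed.
Lemma e0_0 n : (e0 : vec n.+1) ord0 = 1.
Proof. by rewrite /e0 eqxx. Qed.

Lemma vec_eq1 n (x y : vec n.+1) :
  x ord0 = y ord0 -> (forall k, x (lift ord0 k) = y (lift ord0 k)) -> x = y.
Proof.
move=> H0 H1; apply: functional_extensionality => j.
by case: (unliftP ord0 j) => [k ->|->].
Qed.

Definition tl {n} (x : vec n.+1) : vec n := fun k => x (lift ord0 k).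
Lemma decomp n (x : vec n.+1) :
  x = vadd (vscale (x ord0) e0) (ext0 (tl x)).
Proof.
apply: vec_eq1 => [|k]; rewrite /vadd /vscale /tl ?ext0_0 ?e0_0 ?ext0_lift ?e0_lift; ring.
Qed.

Lemma NL_ext n (N : vec n.+1 -> R) : NL N -> NL (fun w : vec n => N (ext0 w)).
Proof.
move=> HN; have [H0 [Hz [Hs Ht]]] := HN.
split; [by move=> x; apply: H0|split; [|split]].
- move=> x Hx i; have := Hz _ Hx (lift ord0 i); by rewrite ext0_lift.
- move=> a x; rewrite -Hs; congr N; apply: vec_eq1 => [|k];
    rewrite /vscale ?ext0_0 ?ext0_lift; ring.
- move=> x y; apply: Rle_trans (Ht _ _); right; congr N; apply: vec_eq1 => [|k];
    rewrite /vadd ?ext0_0 ?ext0_lift; ring.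
Qed.

Arguments NL_ext {n N}.
Lemma sabs_recl n (x : vec n.+1) : sabs x = Rabs (x ord0) + sabs (tl x).
Proof. by rewrite /sabs big_ord_recl. Qed.

Lemma norm_upper n (N : vec n -> R) : NL N -> exists K, 0 <= K /\ forall x, N x <= K * sabs x.
Proof.
elim: n N => [|n IH] N HN.
  exists 0; split; first lra; move=> x.
  have -> : x = zv by apply: functional_extensionality => -[].
  rewrite (NL_zv HN); lra.
have [K' [HK' HK]] := IH _ (NL_ext HN).
have [H0 [Hz [Hs Ht]]] := HN.
exists (N e0 + K'); split; first by have := H0 e0; lra.
move=> x; rewrite {1}(decomp x) sabs_recl.
apply: Rle_trans (Ht _ _) _; rewrite Hs.
have := HK (tl x); have := H0 e0; have := Rabs_pos (x ord0).
have := sabs_ge0 (tl x); nra.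
Qed.

Lemma eps_le0 a : (forall eps, 0 < eps -> a <= eps) -> a <= 0.
Proof. move=> H; apply: Rnot_lt_le => Ha; have := H (a / 2); lra. Qed.

Lemma arch eps : 0 < eps -> exists M, forall m, (M <= m)%nat -> / (INR m + 1) < eps.
Proof.
move=> He; have [M [HM HM0]] := archimed_cor1 _ He.
exists M => m /leP Hm; apply: Rle_lt_trans HM.
have HMp : 0 < INR M by apply: lt_0_INR.
apply: Rinv_le_contravar => //; have := le_INR _ _ Hm; lra.
Qed.


Lemma inv_pos_nat m : 0 < / (INR m + 1).
Proof. apply: Rinv_0_lt_compat; have := pos_INR m; lra. Qed.

Lemma Rdiv_le_l a b c : 0 < b -> a <= c * b -> a / b <= c.
Proof.
move=> Hb H; have Hi : 0 < / b by apply: Rinv_0_lt_compat.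
rewrite (_ : c = c * b * / b); last by field; lra.
rewrite /Rdiv; apply: Rmult_le_compat_r; lra.
Qed.

Lemma delta_pos n (N : vec n.+1 -> R) : NL N ->
  (exists c', 0 < c' /\ forall w k, c' * Rabs (w k) <= N (ext0 w)) ->
  exists d, 0 < d /\ forall w, d <= N (vadd e0 (ext0 w)).
Proof.
move=> HN [c' [Hc' Hc]]; have [H0 [Hz [Hs Ht]]] := HN.
have [K' [HK' HK]] := norm_upper (NL_ext HN).
apply: NNPP => Hn.
have H : forall m : nat, exists w, N (vadd e0 (ext0 w)) < / (INR m + 1).
  move=> m; apply: NNPP => Hm; apply: Hn; exists (/ (INR m + 1)); split.
    exact: inv_pos_nat.
  move=> w; apply: Rnot_lt_le => Hw; apply: Hm; by exists w.
pose ws m := proj1_sig (constructive_indefinite_description _ (H m)).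
have Hws m : N (vadd e0 (ext0 (ws m))) < / (INR m + 1).
  exact: (proj2_sig (constructive_indefinite_description _ (H m))).
have Hd m m' k : c' * Rabs (ws m k - ws m' k) <= / (INR m + 1) + / (INR m' + 1).
  pose dw : vec n := fun k => ws m k - ws m' k.
  apply: Rle_trans (Hc dw k) _.
  have -> : ext0 dw = vadd (vadd e0 (ext0 (ws m))) (vscale (-1) (vadd e0 (ext0 (ws m')))).
    apply: vec_eq1 => [|j]; rewrite /vadd /vscale /dw ?ext0_0 ?e0_0 ?ext0_lift ?e0_lift; ring.
  apply: Rle_trans (Ht _ _) _; rewrite (NL_opp _ HN).
  have := Hws m; have := Hws m'; lra.
have HC k : Cauchy_crit (fun m => ws m k).
  move=> eps He; have [M HM] := @arch (eps * c' / 2) ltac:(nra).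
  exists M => a b /leP Ha /leP Hb; rewrite /Rdist.
  have := Hd a b k; have := HM a Ha; have := HM b Hb.
  have := Rabs_pos (ws a k - ws b k).
  move=> h1 h2 h3 h4.
  apply: (Rmult_lt_reg_l c') => //; nra.
pose l : vec n := fun k => proj1_sig (R_complete _ (HC k)).
have Hl k : Un_cv (fun m => ws m k) (l k) := proj2_sig (R_complete _ (HC k)).
have Hlz : N (vadd e0 (ext0 l)) <= 0.
  apply: eps_le0 => eps He.
  have [M0 HM0] := @arch (eps / 2) ltac:(lra).
  pose eps2 := eps / 2 / (K' * INR n + 1).
  have He2 : 0 < eps2.
    rewrite /eps2; apply: Rdiv_lt_0_compat; [lra|]; have := pos_INR n; nra.
  pose Mk k := proj1_sig (constructive_indefinite_description _ (Hl k eps2 He2)).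
  have HMk k m : (m >= Mk k)%coq_nat -> Rdist (ws m k) (l k) < eps2.
    exact: (proj2_sig (constructive_indefinite_description _ (Hl k eps2 He2))).
  pose m := maxn M0 (\max_(k < n) Mk k).
  have -> : vadd e0 (ext0 l) = vadd (vadd e0 (ext0 (ws m))) (ext0 (fun k => l k - ws m k)).
    apply: vec_eq1 => [|j]; rewrite /vadd ?ext0_0 ?e0_0 ?ext0_lift ?e0_lift; ring.
  apply: Rle_trans (Ht _ _) _.
  have h1 : N (vadd e0 (ext0 (ws m))) < eps / 2.
    apply: Rlt_trans (Hws m) _; apply: HM0; exact: leq_maxl.
  have h2 : sabs (fun k => l k - ws m k) <= INR n * eps2.
    rewrite -sumR_const; apply: sumR_le => k.
    rewrite Rabs_minus_sym; apply: Rlt_le; apply: HMk; apply/leP.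
    apply: leq_trans (leq_maxr _ _); exact: leq_bigmax.
  have h3 := HK (fun k => l k - ws m k).
  have h4 : K' * (INR n * eps2) <= eps / 2.
    rewrite /eps2; have := pos_INR n => hn.
    have -> : K' * (INR n * (eps / 2 / (K' * INR n + 1))) =
      (eps / 2) * (K' * INR n / (K' * INR n + 1)) by field; nra.
    have : K' * INR n / (K' * INR n + 1) <= 1.
      apply: Rdiv_le_l; nra.
    nra.
  have := sabs_ge0 (fun k => l k - ws m k); nra.
have := Hz _ (Rle_antisym _ _ Hlz (H0 _)) ord0.
rewrite /vadd ext0_0 e0_0; lra.
Qed.

Lemma norm_lower n (N : vec n -> R) : NL N ->
  exists c, 0 < c /\ forall x i, c * Rabs (x i) <= N x.
Proof.
elim: n N => [|n IH] N HN.
  by exists 1; split; [lra| move=> x -[]].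
have [c' [Hc' Hc]] := IH _ (NL_ext HN).
have [d [Hd Hdl]] := delta_pos HN (ex_intro _ c' (conj Hc' Hc)).
have [H0 [Hz [Hs Ht]]] := HN.
have He := H0 e0.
have Ha x : Rabs (x ord0) * d <= N x.
  case: (Req_dec (x ord0) 0) => [->|Hx0]; first by rewrite Rabs_R0; have := H0 x; lra.
  have E : vscale (x ord0) (vadd e0 (ext0 (vscale (/ x ord0) (tl x)))) = x.
    apply: vec_eq1 => [|k]; rewrite /vadd /vscale /tl ?ext0_0 ?e0_0 ?ext0_lift ?e0_lift;
      field; exact: Hx0.
  rewrite -{2}E Hs; have := Hdl (vscale (/ x ord0) (tl x)); have := Rabs_pos (x ord0).
  nra.
exists (Rmin d (c' * d / (d + N e0))); split.
  apply: Rmin_pos => //; apply: Rdiv_lt_0_compat; nra.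
move=> x i.
have Hm1 := Rmin_l d (c' * d / (d + N e0)).
have Hm2 := Rmin_r d (c' * d / (d + N e0)).
have Hmp : 0 <= Rmin d (c' * d / (d + N e0)).
  apply: Rlt_le; apply: Rmin_pos => //; apply: Rdiv_lt_0_compat; nra.
case: (unliftP ord0 i) => [k ->|->].
- have Htl : N (ext0 (tl x)) <= N x + Rabs (x ord0) * N e0.
    have -> : ext0 (tl x) = vadd x (vscale (-1) (vscale (x ord0) e0)).
      apply: vec_eq1 => [|j]; rewrite /vadd /vscale /tl ?ext0_0 ?e0_0 ?ext0_lift ?e0_lift; ring.
    apply: Rle_trans (Ht _ _) _; rewrite (NL_opp _ HN) Hs; lra.
  have h1 := Hc (tl x) k.
  have h2 := Ha x.
  change (x (lift ord0 k)) with (tl x k).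
  have h3 : c' * d / (d + N e0) * Rabs (tl x k) <= N x.
    have -> : c' * d / (d + N e0) * Rabs (tl x k) =
      (c' * Rabs (tl x k)) * (d / (d + N e0)) by field; lra.
    apply/Rle_trans; first apply: Rmult_le_compat_r; [|exact: h1|].
      apply: Rlt_le; apply: Rdiv_lt_0_compat; lra.
    have -> : N (ext0 (tl x)) * (d / (d + N e0)) =
      d * N (ext0 (tl x)) / (d + N e0) by field; lra.
    apply: Rdiv_le_l; first lra.
    have := H0 x; nra.
  have := Rabs_pos (tl x k); nra.
- have := Ha x; have := Rabs_pos (x ord0); nra.
Qed.


Section NormP.
Context {p : nat}.
Implicit Types x y z u v w : vec p.

Lemma is_norm_NL (N : vec p -> R) : is_norm N -> NL N.
Proof.
move=> [H0 [Hz [Hs Ht]]]; split; [done|split; [|done]].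
by move=> x /Hz -> i.
Qed.

Lemma N_le_enorm (N : vec p -> R) : is_norm N -> exists K, 0 <= K /\ forall x, N x <= K * enorm x.
Proof.
move=> /is_norm_NL HN; have [K [HK H]] := norm_upper HN.
exists (K * INR p); split; first by have := pos_INR p; nra.
move=> x; apply: Rle_trans (H x) _; have := sabs_le_enorm x; nra.
Qed.

Lemma vscale_zv a : vscale a (zv : vec p) = zv.
Proof. by apply: functional_extensionality => i; rewrite /vscale /zv; ring. Qed.

Lemma N_zv (N : vec p -> R) : is_norm N -> N zv = 0.
Proof. by move=> /is_norm_NL HN; exact: NL_zv HN. Qed.

Lemma dual_norm_bound (N : vec p -> R) z x : is_norm N -> dot z x <= dual_norm N z * N x.
Proof.
move=> HNn; have HN := is_norm_NL HNn.
have [c [Hc Hlow]] := norm_lower HN.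
have [H0 [Hz [Hs Ht]]] := HNn.
set E := fun r : R => exists x, N x <= 1 /\ r = dot z x.
have Hb : bound E.
  exists (sabs z / c) => r [y [Hy ->]].
  have h1 := Rle_abs (dot z y).
  apply: Rle_trans h1 _.
  rewrite /dot; apply: Rle_trans; first exact: sumR_abs.
  rewrite /sabs /Rdiv big_distrl /=; apply: sumR_le => i.
  rewrite Rabs_mult; have := Hlow y i; have := Rabs_pos (z i); have := Rabs_pos (y i).
  move=> a1 a2 a3.
  have hi : 0 < / c by apply: Rinv_0_lt_compat.
  have : Rabs (y i) <= / c by
    rewrite (_ : / c = 1 * / c); last ring;
    rewrite (_ : Rabs (y i) = c * Rabs (y i) * / c); [apply: Rmult_le_compat_r; lra| field; lra].
  nra.
have Hne : exists r, E r by exists 0, zv; split; [rewrite (N_zv HNn); lra| by rewrite dot_zv_r].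
have [l Hl] := completeness E Hb Hne.
rewrite /dual_norm -/E (Rsup_lub _ _ Hl).
case: (Req_dec (N x) 0) => [Hx|Hx].
  have -> : x = zv by apply: Hz.
  rewrite dot_zv_r (N_zv HNn); lra.
have Hxp : 0 < N x by have := H0 x; lra.
have : E (dot z (vscale (/ N x) x)).
  exists (vscale (/ N x) x); split => //.
  rewrite Hs Rabs_pos_eq; [right; field; lra| apply: Rlt_le; exact: Rinv_0_lt_compat].
move=> /(proj1 Hl); rewrite dot_vscale_r => h.
have -> : dot z x = (/ N x * dot z x) * N x by field; lra.
apply: Rmult_le_compat_r; lra.
Qed.

Lemma N_opp (N : vec p -> R) x : is_norm N -> N (vscale (-1) x) = N x.
Proof. by move=> /is_norm_NL HN; apply: NL_opp. Qed.

Lemma N_vsub_tri (N : vec p -> R) a b c : is_norm N ->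
  N (vsub a c) <= N (vsub a b) + N (vsub b c).
Proof.
move=> [_ [_ [_ Ht]]]; apply: Rle_trans (Ht _ _); right; congr N.
by apply: functional_extensionality => i; rewrite /vsub /vadd; ring.
Qed.

Lemma N_vsub_sym (N : vec p -> R) a b : is_norm N -> N (vsub a b) = N (vsub b a).
Proof. by move=> HN; rewrite vsub_sym (N_opp _ HN). Qed.

End NormP.


Section Conj.
Context {p : nat}.
Implicit Types x y z u v w th : vec p.

Lemma fconj_ge (D : vec p -> Prop) f th w :
  conj_fin D f th -> D w -> dot th w - f w <= fconj D f th.
Proof.
move=> [l Hl] Hw; rewrite /fconj (Rsup_lub _ _ Hl); apply: (proj1 Hl).
by exists w.
Qed.

Lemma fconj_approx (D : vec p -> Prop) f th eta :
  conj_fin D f th -> 0 < eta -> exists w, D w /\ fconj D f th - eta < dot th w - f w.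
Proof.
move=> [l Hl] He; rewrite /fconj (Rsup_lub _ _ Hl).
apply: NNPP => Hn.
have : l <= l - eta; last lra.
apply: (proj2 Hl) => r [w [Hw ->]].
apply: Rnot_lt_le => Hlt; apply: Hn; exists w; split => //; lra.
Qed.

Lemma vsub_vv x : vsub x x = zv.
Proof. by apply: functional_extensionality => i; rewrite /vsub /zv; ring. Qed.
Lemma vsub_vadd x h : vsub (vadd x h) x = h.
Proof. by apply: functional_extensionality => i; rewrite /vsub /vadd; ring. Qed.

Lemma grad_conj_fin (D : vec p -> Prop) f th u :
  has_grad (conj_fin D f) (fconj D f) th u -> conj_fin D f th.
Proof. by move=> [[r [Hr H]] _]; apply: H; rewrite vsub_vv enorm_zv. Qed.

Lemma approx_max (D : vec p -> Prop) f th u :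
  has_grad (conj_fin D f) (fconj D f) th u ->
  forall e, 0 < e -> exists eta, 0 < eta /\ forall w, D w ->
    fconj D f th - eta <= dot th w - f w -> enorm (vsub w u) <= e.
Proof.
move=> Hgr e He; have [[r [Hr Hint]] Hg] := Hgr.
have [d [Hd Hdd]] := Hg (e / 2) ltac:(lra).
pose s := Rmin d r / 2.
have Hs0 : 0 < s by rewrite /s; have := Rmin_pos _ _ Hd Hr; lra.
have Hsd : s < d by rewrite /s; have := Rmin_l d r; lra.
have Hsr : s < r by rewrite /s; have := Rmin_r d r; lra.
exists (s * e / 2); split; first nra.
move=> w Dw Hgap.
case: (Req_dec (enorm (vsub w u)) 0) => [->|Hnz]; first lra.
set nw := enorm (vsub w u) in Hnz *.
have Hnw : 0 < nw by have := enorm_ge0 (vsub w u); rewrite -/nw; lra.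
pose h := vscale (s / nw) (vsub w u).
have Hh : enorm h = s.
  rewrite /h enorm_scale -/nw Rabs_pos_eq; [field; lra| apply: Rlt_le; exact: Rdiv_lt_0_compat].
have Hcf : conj_fin D f (vadd th h) by apply: Hint; rewrite vsub_vadd Hh.
have H1 := fconj_ge Hcf Dw.
have H2 := Hdd h ltac:(lra).
rewrite Hh in H2.
have H3 := Rle_abs (fconj D f (vadd th h) - fconj D f th - dot u h).
have Edot : dot h (vsub w u) = s * nw.
  rewrite /h dot_vscale_l dot_self_enorm -/nw; field; lra.
have : dot h (vsub w u) <= s * e.
  rewrite dot_vsub_r; rewrite dot_vadd_l (dot_comm th w) (dot_comm h w) in H1.
  rewrite (dot_comm u h) in H3 H2; rewrite (dot_comm th w) in Hgap; rewrite (dot_comm h w); lra.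
rewrite Edot => H4.
apply: (Rmult_le_reg_l s) => //; lra.
Qed.

End Conj.


Section SC.
Context {p : nat}.
Implicit Types x y z u v w th mu : vec p.

Lemma sc_bound (dom C : vec p -> Prop) (Psi N : vec p -> R) beta th u mu :
  is_norm N -> 0 < beta -> strongly_convex_over Psi C N beta -> vconvex C ->
  (forall w, C w -> dom w) -> C mu ->
  conj_fin (Omega_dom dom C) Psi th ->
  (forall e eta, 0 < e -> 0 < eta -> exists w, C w /\
      Omega_star dom C Psi th - eta <= dot th w - Psi w /\ N (vsub w u) <= e) ->
  N (vsub mu u) ^ 2 / (2 * beta) <= Omega_star dom C Psi th + Psi mu - dot th mu.
Proof.
move=> HN Hb Hsc Hcv Hdom Cmu Hfin Happ.
set F := Omega_star dom C Psi th.
set G := F + Psi mu - dot th mu.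
set n := N (vsub mu u).
have HG0 : 0 <= G.
  have := fconj_ge Hfin (conj (Hdom _ Cmu) Cmu : Omega_dom dom C mu).
  rewrite /G /F /Omega_star; lra.
have Hn0 : 0 <= n by case: HN => H0 _; apply: H0.
apply: Rnot_lt_le => Hlt.
set g := n ^ 2 / (2 * beta) - G.
have Hg : 0 < g by rewrite /g; lra.
have Hnp : 0 < n.
  apply: Rnot_le_lt => Hle; have Hn : n = 0 by lra.
  rewrite /g Hn in Hg.
  have : 0 ^ 2 / (2 * beta) = 0 by field; lra.
  lra.
pose t := Rmin (1 / 2) (beta * g / (2 * n ^ 2)).
have Ht0 : 0 < t.
  apply: Rmin_pos; first lra.
  apply: Rdiv_lt_0_compat; nra.
have Ht1 : t <= 1 / 2 by apply: Rmin_l.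
have Ht2 : t * n ^ 2 / (2 * beta) <= g / 4.
  have := Rmin_r (1 / 2) (beta * g / (2 * n ^ 2)); rewrite -/t => h.
  have -> : g / 4 = (beta * g / (2 * n ^ 2)) * n ^ 2 / (2 * beta) by field; lra.
  apply: Rmult_le_compat_r; first (apply: Rlt_le; apply: Rinv_0_lt_compat; lra).
  apply: Rmult_le_compat_r; nra.
pose e := Rmin n (beta * g / (4 * n)).
have He0 : 0 < e.
  apply: Rmin_pos => //; apply: Rdiv_lt_0_compat; nra.
have He1 : e <= n by apply: Rmin_l.
have He2 : e * n / beta <= g / 4.
  have := Rmin_r n (beta * g / (4 * n)); rewrite -/e => h.
  have -> : g / 4 = (beta * g / (4 * n)) * n / beta by field; lra.
  apply: Rmult_le_compat_r; first (apply: Rlt_le; apply: Rinv_0_lt_compat; lra).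
  apply: Rmult_le_compat_r; nra.
pose eta := t * g / 4.
have Heta : 0 < eta by rewrite /eta; nra.
have [w [Cw [Hw Hwu]]] := Happ e eta He0 Heta.
pose v := cvx t mu w.
have Cv : C v by apply: Hcv => //; lra.
have H1 : dot th v - Psi v <= F by exact: (fconj_ge Hfin (conj (Hdom _ Cv) Cv : Omega_dom dom C v)).
have H2 := Hsc mu w t Cmu Cw ltac:(lra).
rewrite -/v in H2.
have H3 : dot th v = t * dot th mu + (1 - t) * dot th w by rewrite /v dot_cvx_r.
set M := N (vsub mu w) in H2.
have HM : n <= M + e.
  have := N_vsub_tri mu w u HN; rewrite -/n -/M; lra.
have HM0 : 0 <= M by case: HN => H0 _; apply: H0.
rewrite -/F in Hw.
have H4 : t * G >= - (1 - t) * eta + t * (1 - t) / (2 * beta) * M ^ 2.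
  have Hw' : (1 - t) * (F - eta) <= (1 - t) * (dot th w - Psi w).
    apply: Rmult_le_compat_l; lra.
  rewrite /G; nra.
have H5 : G >= - (1 - t) * (g / 4) + (1 - t) / (2 * beta) * M ^ 2.
  apply: Rle_ge; apply: (Rmult_le_reg_l t) => //.
  rewrite /eta in H4.
  have -> : t * (- (1 - t) * (g / 4) + (1 - t) / (2 * beta) * M ^ 2) =
    - (1 - t) * (t * g / 4) + t * (1 - t) / (2 * beta) * M ^ 2 by field; lra.
  lra.
have H6 : (1 - t) * M ^ 2 >= n ^ 2 - 2 * e * n - t * n ^ 2.
  have h : (n - e) ^ 2 <= M ^ 2.
    apply: pow_incr; lra.
  have h2 : (1 - t) * (n - e) ^ 2 <= (1 - t) * M ^ 2 by apply: Rmult_le_compat_l; lra.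
  have h3 : (1 - t) * (n - e) ^ 2 = n ^ 2 - 2 * e * n - t * n ^ 2 + ((1 - t) * e ^ 2 + 2 * t * e * n) by ring.
  have h4 : 0 <= (1 - t) * e ^ 2 + 2 * t * e * n.
    apply: Rplus_le_le_0_compat; first (apply: Rmult_le_pos; [lra| apply: pow_le; lra]).
    have := Rmult_le_pos _ _ (Rlt_le _ _ Ht0) (Rlt_le _ _ He0); have := Rlt_le _ _ Hnp. nra.
  lra.
have H7 : (1 - t) / (2 * beta) * M ^ 2 >= (n ^ 2 - 2 * e * n - t * n ^ 2) / (2 * beta).
  have hb : 0 < / (2 * beta) by apply: Rinv_0_lt_compat; lra.
  rewrite (_ : (1 - t) / (2 * beta) * M ^ 2 = ((1 - t) * M ^ 2) * / (2 * beta)); last by field; lra.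
  apply: Rle_ge; rewrite /Rdiv; apply: Rmult_le_compat_r; lra.
have H8 : (n ^ 2 - 2 * e * n - t * n ^ 2) / (2 * beta) =
  n ^ 2 / (2 * beta) - e * n / beta - t * n ^ 2 / (2 * beta) by field; lra.
have : G >= n ^ 2 / (2 * beta) - 3 * g / 4 by nra.
rewrite /g; lra.
Qed.

End SC.


Section Grad.
Context {p : nat}.
Implicit Types x y z u v w th mu : vec p.

Lemma interior_mem (D : vec p -> Prop) x : vinterior D x -> D x.
Proof. by move=> [r [Hr H]]; apply: H; rewrite vsub_vv enorm_zv. Qed.

Lemma grad_ineq (dom : vec p -> Prop) (Psi : vec p -> R) z g w :
  ext_convex dom Psi -> has_grad dom Psi z g -> dom w ->
  Psi z + dot g (vsub w z) <= Psi w.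
Proof.
move=> [Hdc Hfc] [Hint Hd] Dw.
have Dz := interior_mem Hint.
set k := vsub w z.
have Hk0 := enorm_ge0 k.
suff H : forall e, 0 < e -> Psi z + dot g k - Psi w <= e * (enorm k + 1).
  have : Psi z + dot g k - Psi w <= 0; last lra.
  apply: eps_le0 => e He.
  have := H (e / (enorm k + 1)) ltac:(apply: Rdiv_lt_0_compat; lra).
  have -> : e / (enorm k + 1) * (enorm k + 1) = e by field; lra.
  done.
move=> e He; have [d [Hd0 Hdd]] := Hd e He.
pose t := Rmin 1 (d / (2 * (enorm k + 1))).
have Ht0 : 0 < t by apply: Rmin_pos; [lra| apply: Rdiv_lt_0_compat; lra].
have Ht1 : t <= 1 by apply: Rmin_l.
have Ht2 : t * enorm k < d.
  have := Rmin_r 1 (d / (2 * (enorm k + 1))); rewrite -/t => h.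
  apply: Rle_lt_trans (_ : t * enorm k <= d / (2 * (enorm k + 1)) * (enorm k + 1)) _.
    apply: Rmult_le_compat; lra.
  have -> : d / (2 * (enorm k + 1)) * (enorm k + 1) = d / 2 by field; lra.
  lra.
pose h := vscale t k.
have Hh : enorm h = t * enorm k by rewrite /h enorm_scale Rabs_pos_eq; lra.
have H1 := Hdd h ltac:(lra).
have Ezh : vadd z h = cvx t w z.
  by apply: functional_extensionality => i; rewrite /cvx /h /k /vadd /vscale /vsub; ring.
rewrite Ezh Hh /h dot_vscale_r in H1.
have H2 := Hfc w z t Dw Dz ltac:(lra).
have H3 := Rle_abs (- (Psi (cvx t w z) - Psi z - t * dot g k)).
rewrite Rabs_Ropp in H3.
have : t * (Psi z + dot g k - Psi w) <= t * (e * (enorm k + 1)).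
  have := Rmult_le_pos _ _ (Rlt_le _ _ Ht0) (Rlt_le _ _ He). nra.
apply: Rmult_le_reg_l; lra.
Qed.

Lemma int_seg (dom : vec p -> Prop) x0 mu s :
  vconvex dom -> vinterior dom x0 -> dom mu -> 0 < s <= 1 -> vinterior dom (cvx s x0 mu).
Proof.
move=> Hcv [r [Hr Hb]] Dmu Hs.
exists (s * r); split; first nra.
move=> y Hy.
pose y' := vadd x0 (vscale (/ s) (vsub y (cvx s x0 mu))).
have Dy' : dom y'.
  apply: Hb; rewrite /y' vsub_vadd enorm_scale Rabs_pos_eq; last first.
    apply: Rlt_le; apply: Rinv_0_lt_compat; lra.
  apply: (Rmult_lt_reg_l s); first lra.
  rewrite -Rmult_assoc Rinv_r; lra.
have -> : y = cvx s y' mu.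
  apply: functional_extensionality => i; rewrite /cvx /y' /vadd /vscale /vsub /cvx /vadd /vscale.
  field; lra.
apply: Hcv => //; lra.
Qed.

Lemma lub_of_max (E : R -> Prop) m : E m -> (forall r, E r -> r <= m) -> is_lub E m.
Proof. move=> Hm H; split; first exact: H. by move=> b Hb; apply: Hb. Qed.

End Grad.


Section Inf.
Context {p : nat}.
Implicit Types x y z u v w th mu : vec p.

Lemma conj_bound_grad (dom C : vec p -> Prop) (Psi : vec p -> R) z g mu :
  ext_convex dom Psi -> has_grad dom Psi z g -> Omega_dom dom C mu ->
  conj_fin (Omega_dom dom C) Psi g /\
  Omega_star dom C Psi g <= dot g z - Psi z.
Proof.
move=> Hc Hg Hmu.
set E := conj_set (Omega_dom dom C) Psi g.
have Hub : is_upper_bound E (dot g z - Psi z).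
  move=> r [w [[Dw _] ->]]; have := grad_ineq Hc Hg Dw; rewrite dot_vsub_r; lra.
have Hne : exists r, E r by exists (dot g mu - Psi mu), mu.
have [l Hl] := completeness E (ex_intro _ _ Hub) Hne.
split; first by exists l.
rewrite /Omega_star /fconj -/E (Rsup_lub _ _ Hl); exact: (proj2 Hl).
Qed.

Lemma approx_inf (dom C : vec p -> Prop) (Psi : vec p -> R) mu :
  legendre_type dom Psi -> Omega_dom dom C mu ->
  forall eps, 0 < eps -> exists th, conj_fin (Omega_dom dom C) Psi th /\
    Omega_star dom C Psi th - dot th mu + Psi mu <= eps.
Proof.
move=> [_ [Hc [Hlsc [[[x0 Hx0] [Hgr _]] _]]]] Hmu eps He.
have Dmu : dom mu by case: Hmu.
have Hlt : Psi mu - eps / 2 < Psi mu by lra.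
have [d [Hd Hdd]] := Hlsc mu (Psi mu - eps / 2) (or_intror Hlt).
set B := Rabs (Psi x0 - Psi mu) + eps / 2.
have HB : 0 < B by have := Rabs_pos (Psi x0 - Psi mu); rewrite /B; lra.
set m := enorm (vsub x0 mu).
have Hm := enorm_ge0 (vsub x0 mu); rewrite -/m in Hm.
pose s := Rmin (1 / 2) (Rmin (eps / (4 * (B + 1))) (d / (2 * (m + 1)))).
have Hs0 : 0 < s.
  apply: Rmin_pos; first lra; apply: Rmin_pos; apply: Rdiv_lt_0_compat; lra.
have Hs1 : s <= 1 / 2 by apply: Rmin_l.
have Hs2 : s <= eps / (4 * (B + 1)).
  apply: Rle_trans (Rmin_r _ _) _; apply: Rmin_l.
have Hs3 : s <= d / (2 * (m + 1)).
  apply: Rle_trans (Rmin_r _ _) _; apply: Rmin_r.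
have Hsm : s * m < d.
  apply: Rle_lt_trans (_ : s * m <= d / (2 * (m + 1)) * (m + 1)) _.
    apply: Rmult_le_compat; lra.
  have -> : d / (2 * (m + 1)) * (m + 1) = d / 2 by field; lra.
  lra.
have Hsb : 2 * s * B <= eps / 2.
  have : s * (4 * (B + 1)) <= eps.
    have h : eps = eps / (4 * (B + 1)) * (4 * (B + 1)) by field; lra.
    rewrite {1}h; apply: Rmult_le_compat_r; lra.
  nra.
pose z := cvx s x0 mu.
have Hz : vinterior dom z by apply: int_seg => //; [exact: (proj1 Hc)| lra].
have [g Hg] := Hgr z Hz.
have [Hfin Hup] := conj_bound_grad Hc Hg Hmu.
exists g; split => //.
have Hzm : vsub z mu = vscale s (vsub x0 mu).
  by apply: functional_extensionality => i; rewrite /z /cvx /vsub /vadd /vscale; ring.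
have Hpz : Psi mu - eps / 2 < Psi z.
  apply: Hdd; last exact: interior_mem Hz.
  rewrite Hzm enorm_scale -/m Rabs_pos_eq; lra.
have Hx0d := interior_mem Hx0.
have Hgi := grad_ineq Hc Hg Hx0d.
have Hxz : vsub x0 z = vscale (1 - s) (vsub x0 mu).
  by apply: functional_extensionality => i; rewrite /z /cvx /vsub /vadd /vscale; ring.
have Hmz : vsub mu z = vscale (- s) (vsub x0 mu).
  by apply: functional_extensionality => i; rewrite /z /cvx /vsub /vadd /vscale; ring.
rewrite Hxz dot_vscale_r in Hgi.
set a := dot g (vsub x0 mu) in Hgi.
have Egz : dot g z - dot g mu = s * a.
  rewrite -dot_vsub_r vsub_sym Hmz dot_vscale_r dot_vscale_r -/a; ring.
have Hx0B : Psi x0 - Psi z <= B.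
  have := Rle_abs (Psi x0 - Psi mu); rewrite /B; lra.
have Hsa : s * a <= eps / 2.
  case: (Rle_or_lt a 0) => Ha.
    have : s * a <= 0 by nra.
    have : 0 <= 2 * s * B by nra.
    lra.
  have h1 : s * a <= 2 * s * ((1 - s) * a).
    have := Rmult_le_pos (s * a) (1 - 2 * s) ltac:(nra) ltac:(lra); nra.
  have h2 : 2 * s * ((1 - s) * a) <= 2 * s * B by apply: Rmult_le_compat_l; lra.
  lra.
lra.
Qed.

End Inf.


Section Breg.
Context {p : nat}.
Implicit Types x y z u v w th mu : vec p.

Lemma grad_max_is_max (dom : vec p -> Prop) (Psi : vec p -> R) th v :
  ext_lsc dom Psi -> has_grad (conj_fin dom Psi) (fconj dom Psi) th v -> dom v ->
  forall w, dom w -> dot th w - Psi w <= dot th v - Psi v.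
Proof.
move=> Hlsc Hv Dv w Dw.
have Hfin := grad_conj_fin Hv.
apply: Rle_trans (fconj_ge Hfin Dw) _.
suff : fconj dom Psi th - (dot th v - Psi v) <= 0 by lra.
apply: eps_le0 => dl Hdl.
have Hlt : Psi v - dl / 2 < Psi v by lra.
have [d1 [Hd1 Hdd1]] := Hlsc v (Psi v - dl / 2) (or_intror Hlt).
pose S := sabs th.
have HS : 0 <= S := sabs_ge0 th.
pose e := Rmin (d1 / 2) (dl / (4 * (S + 1))).
have He : 0 < e by apply: Rmin_pos; apply: Rdiv_lt_0_compat; lra.
have [eta [Heta Happ]] := approx_max Hv He.
have Heta' : 0 < Rmin eta (dl / 4) by apply: Rmin_pos; lra.
have [w' [Dw' Hw']] := fconj_approx Hfin Heta'.
have Hm1 := Rmin_l eta (dl / 4).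
have Hm2 := Rmin_r eta (dl / 4).
have Hwv := Happ w' Dw' ltac:(lra).
have He1 : e <= d1 / 2 by apply: Rmin_l.
have He2 : e <= dl / (4 * (S + 1)) by apply: Rmin_r.
have HP := Hdd1 w' ltac:(lra) Dw'.
have Hdt : dot th (vsub w' v) <= dl / 4.
  apply: Rle_trans (Rle_abs _) _; apply: Rle_trans (dot_abs_le _ _) _.
  rewrite -/S.
  apply: Rle_trans (_ : S * enorm (vsub w' v) <= S * (dl / (4 * (S + 1)))) _.
    apply: Rmult_le_compat_l; lra.
  have -> : S * (dl / (4 * (S + 1))) = dl / 4 * (S / (S + 1)) by field; lra.
  have : S / (S + 1) <= 1 by apply: Rdiv_le_l; lra.
  nra.
rewrite dot_vsub_r in Hdt.
lra.
Qed.

Lemma grad_eq_at_max (dom : vec p -> Prop) (Psi : vec p -> R) th v g :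
  has_grad dom Psi v g ->
  (forall w, dom w -> dot th w - Psi w <= dot th v - Psi v) -> th = g.
Proof.
move=> [[r [Hr Hint]] Hd] Hmax.
set k := vsub th g.
suff : enorm k = 0.
  move=> /enorm_eq0 Hk; apply: functional_extensionality => i.
  have := f_equal (fun f => f i) Hk; rewrite /k /vsub /zv; lra.
have Hk0 := enorm_ge0 k.
apply: Rle_antisym => //; apply: eps_le0 => e He.
have [d [Hd0 Hdd]] := Hd e He.
case: (Req_dec (enorm k) 0) => [->|Hnz]; first lra.
have Hnk : 0 < enorm k by lra.
pose s := Rmin d r / 2.
have Hs0 : 0 < s by rewrite /s; have := Rmin_pos _ _ Hd0 Hr; lra.
have Hsd : s < d by rewrite /s; have := Rmin_l d r; lra.
have Hsr : s < r by rewrite /s; have := Rmin_r d r; lra.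
pose h := vscale (s / enorm k) k.
have Hh : enorm h = s.
  rewrite /h enorm_scale Rabs_pos_eq; [field; lra| apply: Rlt_le; exact: Rdiv_lt_0_compat].
have Dvh : dom (vadd v h) by apply: Hint; rewrite vsub_vadd Hh.
have H1 := Hmax _ Dvh.
have H2 := Hdd h ltac:(lra); rewrite Hh in H2.
have H3 := Rle_abs (Psi (vadd v h) - Psi v - dot g h).
have Ekh : dot k h = s * enorm k.
  rewrite /h dot_vscale_r dot_self_enorm; field; lra.
have : dot k h <= e * s.
  rewrite /k dot_vsub_l; rewrite dot_vadd_r (dot_comm th h) in H1.
  rewrite (dot_comm th h); lra.
rewrite Ekh => H4.
apply: (Rmult_le_reg_l s) => //; lra.
Qed.

Lemma breg_case (dom C : vec p -> Prop) (Psi : vec p -> R) th u :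
  legendre_type dom Psi -> (forall w, C w -> dom w) ->
  bregman_proj dom C Psi th u ->
  C u /\ conj_fin (Omega_dom dom C) Psi th /\
  Omega_star dom C Psi th = dot th u - Psi u.
Proof.
move=> [_ [_ [Hlsc _]]] Hdom [v [g [Hv [Hg [Cu Hmin]]]]].
have Dv := interior_mem (proj1 Hg).
have Hmax := grad_max_is_max Hlsc Hv Dv.
have Etg := grad_eq_at_max Hg Hmax.
have Hu : forall w, C w -> dot th w - Psi w <= dot th u - Psi u.
  move=> w Cw; have := Hmin w Cw; rewrite /bregman !dot_vsub_r Etg; lra.
have Hl : is_lub (conj_set (Omega_dom dom C) Psi th) (dot th u - Psi u).
  apply: lub_of_max; first by exists u; split => //; split => //; apply: Hdom.
  by move=> r [w [[_ Cw] ->]]; apply: Hu.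
split => //; split; first by exists (dot th u - Psi u).
by rewrite /Omega_star /fconj (Rsup_lub _ _ Hl).
Qed.

End Breg.


Section Sums.
Context {p : nat} {Y : finType}.

Definition wsum (q : Y -> R) (w : Y -> vec p) : vec p :=
  fun i => \big[Rplus/R0]_(y : Y) (q y * w y i).

Lemma dot_wsum (q : Y -> R) (w : Y -> vec p) x :
  dot x (wsum q w) = \big[Rplus/R0]_(y : Y) (q y * dot x (w y)).
Proof.
rewrite /dot /wsum.
under eq_bigr => i _ do rewrite big_distrr /=.
rewrite exchange_big /=; apply: eq_bigr => y _.
rewrite big_distrr /=; apply: eq_bigr => i _; ring.
Qed.

Lemma sum_split (F G : Y -> R) :
  \big[Rplus/R0]_(y : Y) (F y + G y) = \big[Rplus/R0]_(y : Y) F y + \big[Rplus/R0]_(y : Y) G y.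
Proof. by rewrite big_split. Qed.
Lemma sum_scale_l c (F : Y -> R) :
  \big[Rplus/R0]_(y : Y) (c * F y) = c * \big[Rplus/R0]_(y : Y) F y.
Proof. by rewrite big_distrr. Qed.
Lemma sum_scale_r c (F : Y -> R) :
  \big[Rplus/R0]_(y : Y) (F y * c) = \big[Rplus/R0]_(y : Y) F y * c.
Proof. by rewrite big_distrl. Qed.

Lemma seq_sum_zero (s : seq Y) (q : Y -> R) (phi : Y -> vec p) :
  (forall y, 0 <= q y) -> \big[Rplus/R0]_(y <- s) q y = 0 ->
  forall i, \big[Rplus/R0]_(y <- s) (q y * phi y i) = 0.
Proof.
move=> Hq; elim: s => [|a s IH]; first by move=> _ i; rewrite big_nil.
rewrite !big_cons => H i.
have H1 : 0 <= \big[Rplus/R0]_(y <- s) q y.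
  by apply: (big_ind (fun a => 0 <= a)); [lra| move=> ? ?; lra| move=> y _; apply: Hq].
have Hqa := Hq a.
have Ha : q a = 0 by lra.
have H2 : \big[Rplus/R0]_(y <- s) q y = 0 by lra.
rewrite big_cons (IH H2 i) Ha; ring.
Qed.

Lemma seq_convex (C : vec p -> Prop) (phi : Y -> vec p) (s : seq Y) (q : Y -> R) :
  vconvex C -> (forall y, C (phi y)) -> (forall y, 0 <= q y) ->
  \big[Rplus/R0]_(y <- s) q y = 1 ->
  C (fun i => \big[Rplus/R0]_(y <- s) (q y * phi y i)).
Proof.
move=> Hcv Hphi; elim: s q => [|a s IH] q Hq; first by rewrite big_nil; lra.
rewrite big_cons => Hs.
set T := \big[Rplus/R0]_(y <- s) q y in Hs.
have HT : 0 <= T.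
  by apply: (big_ind (fun a => 0 <= a)); [lra| move=> ? ?; lra| move=> y _; apply: Hq].
have Hqa := Hq a.
case: (Req_dec T 0) => [HT0|HTn].
  have -> : (fun i => \big[Rplus/R0]_(y <- a :: s) (q y * phi y i)) = phi a.
    apply: functional_extensionality => i; rewrite big_cons seq_sum_zero //.
    have -> : q a = 1 by lra.
    ring.
  exact: Hphi.
have HTp : 0 < T by lra.
pose q' y := q y * / T.
have Hq' : forall y, 0 <= q' y.
  move=> y; apply: Rmult_le_pos; [exact: Hq| apply: Rlt_le; exact: Rinv_0_lt_compat].
have Hs' : \big[Rplus/R0]_(y <- s) q' y = 1.
  by rewrite /q' -big_distrl /= -/T; field; lra.
have Cm := IH q' Hq' Hs'.
have -> : (fun i => \big[Rplus/R0]_(y <- a :: s) (q y * phi y i)) =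
  cvx (q a) (phi a) (fun i => \big[Rplus/R0]_(y <- s) (q' y * phi y i)).
  apply: functional_extensionality => i; rewrite big_cons /cvx /vadd /vscale.
  congr (_ + _); rewrite big_distrr /=; apply: eq_bigr => y _; rewrite /q'.
  have -> : 1 - q a = T by lra.
  field; lra.
apply: Hcv => //; lra.
Qed.

Lemma wsum_in_C (C : vec p -> Prop) (phi : Y -> vec p) (q : Y -> R) :
  vconvex C -> (forall y, C (phi y)) -> in_simplex q -> C (wsum q phi).
Proof. by move=> Hcv Hphi [Hq Hs]; apply: seq_convex. Qed.

Lemma seq_min (T : eqType) (f : T -> R) x0 (s : seq T) :
  exists x, f x <= f x0 /\ forall y, y \in s -> f x <= f y.
Proof.
elim: s => [|a s [x [Hx Hy]]]; first by exists x0; split => //; lra.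
case: (Rle_or_lt (f a) (f x)) => H.
  exists a; split; first lra.
  move=> y; rewrite in_cons => /orP [/eqP ->|Hys]; [lra| have := Hy _ Hys; lra].
exists x; split => // y; rewrite in_cons => /orP [/eqP ->|Hys]; [lra| exact: Hy].
Qed.

Lemma Rinf_fin (O : finType) (f : O -> R) (o0 : O) :
  exists os, (forall o', f os <= f o') /\ Rinf (fun w => exists o', w = f o') = f os.
Proof.
have [os [_ Hos]] := seq_min f o0 (enum O).
have Hall : forall o', f os <= f o' by move=> o'; apply: Hos; rewrite mem_enum.
exists os; split => //.
rewrite /Rinf (Rsup_lub _ (- f os)); first ring.
apply: lub_of_max; first by exists os; ring.
by move=> r [o' Ho']; have := Hall o'; lra.
Qed.

End Sums.


Lemma mulmtv_dot p (V : mat p) z x : dot (mulmtv V z) x = dot z (mulmv V x).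
Proof.
rewrite /dot /mulmtv /mulmv.
under eq_bigr => j _ do rewrite big_distrl /=.
rewrite exchange_big /=; apply: eq_bigr => i _.
rewrite big_distrr /=; apply: eq_bigr => j _; ring.
Qed.

Lemma mulmv_vsub p (V : mat p) x y : mulmv V (vsub x y) = vsub (mulmv V x) (mulmv V y).
Proof.
apply: functional_extensionality => i.
change (dot (V i) (vsub x y) = dot (V i) x - dot (V i) y); exact: dot_vsub_r.
Qed.

Lemma mulmv_wsum p (Y : finType) (V : mat p) (q : Y -> R) (w : Y -> vec p) :
  mulmv V (wsum q w) = wsum q (fun y => mulmv V (w y)).
Proof.
apply: functional_extensionality => i.
change (dot (V i) (wsum q w) = \big[Rplus/R0]_(y : Y) (q y * dot (V i) (w y))).
exact: dot_wsum.
Qed.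

Section Main.
Variables (p : nat) (Y O : finType).

Lemma srisk_eq (phi : Y -> vec p) dom C Psi th q :
  \big[Rplus/R0]_(y : Y) q y = 1 ->
  srisk phi dom C Psi th q =
  Omega_star dom C Psi th + \big[Rplus/R0]_(y : Y) (q y * Psi (phi y)) - dot th (wsum q phi).
Proof.
move=> Hq; rewrite /srisk /surr dot_wsum.
have -> : \big[Rplus/R0]_(y : Y) (q y * (Omega_star dom C Psi th + Psi (phi y) - dot th (phi y))) =
  \big[Rplus/R0]_(y : Y) (q y * Omega_star dom C Psi th +
     (q y * Psi (phi y) + (-1) * (q y * dot th (phi y)))).
  by apply: eq_bigr => y _; ring.
rewrite !sum_split sum_scale_r sum_scale_l Hq; ring.
Qed.

Lemma ell_eq (psi : O -> vec p) (phi : Y -> vec p) V b c o q :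
  \big[Rplus/R0]_(y : Y) q y = 1 ->
  ell psi phi V b c o q = dot (psi o) (vadd (mulmv V (wsum q phi)) b) + \big[Rplus/R0]_(y : Y) (q y * c y).
Proof.
move=> Hq; rewrite /ell /lossL mulmv_wsum dot_vadd_r dot_wsum.
have -> : \big[Rplus/R0]_(y : Y) (q y * (dot (psi o) (vadd (mulmv V (phi y)) b) + c y)) =
  \big[Rplus/R0]_(y : Y) (q y * dot (psi o) (mulmv V (phi y)) + (q y * dot (psi o) b + q y * c y)).
  by apply: eq_bigr => y _; rewrite dot_vadd_r; ring.
rewrite !sum_split sum_scale_r Hq; ring.
Qed.

End Main.

Unset Implicit Arguments. Set Strict Implicit.


Theorem mainTheorem8 (p : nat) (Y O : finType)
    (phi : Y -> vec p) (psi : O -> vec p) (V : mat p) (b : vec p) (c : Y -> R)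
    (dom : vec p -> Prop) (Psi : vec p -> R)
    (N : vec p -> R) (beta : R) (C : vec p -> Prop) (sigma : R) :
  is_norm N ->
  0 < beta ->
  legendre_type dom Psi ->
  vclosed C -> vconvex C ->
  (forall y, C (phi y)) -> (forall u, C u -> dom u) ->
  strongly_convex_over Psi C N beta ->
  (forall o, dual_norm N (mulmtv V (psi o)) <= sigma) ->
  (exists o, dual_norm N (mulmtv V (psi o)) = sigma) ->
  0 < sigma ->
  forall eps, 0 <= eps ->
    zeta_ge psi phi V b c dom C Psi eps (eps ^ 2 / (8 * beta * sigma ^ 2)).
Proof.
move=> HN Hb Hleg _ Hcv Hphi Hdom Hsc Hsig _ Hsig0 eps Heps th q o Hq [u [Hproj Hyh]] Hell.
have Hq1 := proj2 Hq.
set mu := wsum q phi.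
have Cmu : C mu by apply: wsum_in_C.
have Omu : Omega_dom dom C mu by split; [apply: Hdom|].
have [Hfin Happ] : conj_fin (Omega_dom dom C) Psi th /\
  (forall e eta, 0 < e -> 0 < eta -> exists w, C w /\
      Omega_star dom C Psi th - eta <= dot th w - Psi w /\ N (vsub w u) <= e).
  case: Hproj => [Hbp|[_ Hgr]].
    have [Cu [Hf HO]] := breg_case Hleg Hdom Hbp.
    split => // e eta He Heta; exists u; split => //; split.
      rewrite HO; lra.
    rewrite vsub_vv (N_zv HN); lra.
  have Hf := grad_conj_fin Hgr.
  split => // e eta He Heta.
  have [K [HK HNK]] := N_le_enorm HN.
  have [eta0 [Heta0 Hap]] := approx_max Hgr (Rdiv_lt_0_compat e (K + 1) He ltac:(lra)).
  have Hmin : 0 < Rmin eta eta0 by apply: Rmin_pos.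
  have [w [[Dw Cw] Hw]] := fconj_approx Hf Hmin.
  have Hm1 := Rmin_l eta eta0; have Hm2 := Rmin_r eta eta0.
  exists w; split => //; split.
    rewrite /Omega_star; lra.
  have Hwu := Hap w (conj Dw Cw) ltac:(lra).
  apply: Rle_trans (HNK _) _.
  apply: Rle_trans (_ : K * enorm (vsub w u) <= K * (e / (K + 1))) _.
    by apply: Rmult_le_compat_l.
  have -> : K * (e / (K + 1)) = e * (K / (K + 1)) by field; lra.
  have : K / (K + 1) <= 1 by apply: Rdiv_le_l; lra.
  nra.
have HG := sc_bound HN Hb Hsc Hcv Hdom Cmu Hfin Happ.
set n := N (vsub mu u) in HG.
set G := Omega_star dom C Psi th + Psi mu - dot th mu in HG.
set A := \big[Rplus/R0]_(y : Y) (q y * Psi (phi y)) - Psi mu.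
have HRinf : Rinf (fun w => exists th', w = srisk phi dom C Psi th' q) <= A.
  suff : forall e, 0 < e -> Rinf (fun w => exists th', w = srisk phi dom C Psi th' q) - A <= e.
    move=> H; have : Rinf (fun w => exists th', w = srisk phi dom C Psi th' q) - A <= 0; last lra.
    by apply: eps_le0.
  move=> e He.
  have [th' [Hf' Hth']] := approx_inf Hleg Omu He.
  have Hs' : srisk phi dom C Psi th' q <= A + e.
    rewrite srisk_eq // -/mu /A; lra.
  have Hs0 : 0 <= srisk phi dom C Psi th' q.
    apply: sumR_ge0 => y; apply: Rmult_le_pos; first exact: (proj1 Hq).
    rewrite /surr.
    have := fconj_ge Hf' (conj (Hdom _ (Hphi y)) (Hphi y) : Omega_dom dom C (phi y)).
    rewrite /Omega_star; lra.
  rewrite /Rinf.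
  case: (classic (exists l, is_lub (fun x => exists th'0, - x = srisk phi dom C Psi th'0 q) l)).
    move=> [l Hl]; rewrite (Rsup_lub _ _ Hl).
    have : - srisk phi dom C Psi th' q <= l.
      apply: (proj1 Hl); exists th'; ring.
    lra.
  move=> Hn; rewrite (Rsup_nolub _ Hn); lra.
have Hds : G <= delta_s phi dom C Psi th q.
  rewrite /delta_s srisk_eq // -/mu.
  move: HRinf; rewrite /A /G; lra.
have [os [Hos HRo]] := Rinf_fin (fun o' => ell psi phi V b c o' q) o.
have Hdl : delta_ell psi phi V b c o q <= 2 * sigma * n.
  rewrite /delta_ell HRo !ell_eq // -/mu.
  have Hy := Hyh os.
  set z := vadd (mulmv V u) b in Hy.
  have E1 : forall o', dot (psi o') (vadd (mulmv V mu) b) =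
      dot (psi o') z + dot (mulmtv V (psi o')) (vsub mu u).
    move=> o'; rewrite mulmtv_dot mulmv_vsub /z dot_vsub_r !dot_vadd_r; ring.
  rewrite !E1.
  have B1 := dual_norm_bound (mulmtv V (psi o)) (vsub mu u) HN.
  have B2 := dual_norm_bound (mulmtv V (psi os)) (vsub u mu) HN.
  have E2 : dot (mulmtv V (psi os)) (vsub u mu) = - dot (mulmtv V (psi os)) (vsub mu u).
    by rewrite vsub_sym dot_vscale_r; ring.
  rewrite E2 (N_vsub_sym _ _ HN) -/n in B2.
  rewrite -/n in B1.
  have Hn0 : 0 <= n by case: HN => H0 _; apply: H0.
  have S1 := Hsig o; have S2 := Hsig os.
  have : dual_norm N (mulmtv V (psi o)) * n <= sigma * n by apply: Rmult_le_compat_r.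
  have : dual_norm N (mulmtv V (psi os)) * n <= sigma * n by apply: Rmult_le_compat_r.
  lra.
have Hn0 : 0 <= n by case: HN => H0 _; apply: H0.
apply: Rle_trans Hds.
apply: Rle_trans HG.
have H1 : eps <= 2 * sigma * n by lra.
have H2 : eps ^ 2 <= (2 * sigma * n) ^ 2 by apply: pow_incr; lra.
have -> : n ^ 2 / (2 * beta) = (2 * sigma * n) ^ 2 / (8 * beta * sigma ^ 2).
  field; lra.
rewrite /Rdiv; apply: Rmult_le_compat_r => //.
apply: Rlt_le; apply: Rinv_0_lt_compat.
have := pow_lt _ 2 Hsig0; nra.
Qed.
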